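(* Let $(X,\tau)$ be a Tychonoff, extremally disconnected space. Then for every ideal $\mathcal{P}$ of closed subsets of $X$, the space $(X,\tau,\mathcal{P})$ is $\tau\mathcal{P}$-zero-dimensional.
   Context: An ideal $\mathcal{P}$ of closed subsets of $X$ is a nonempty family of closed sets closed under finite unions and under taking closed subsets. For $f\colon X\to\mathbb{R}$, $D_f$ denotes the set of points of discontinuity of $f$, and $C(X)_\mathcal{P}=\{f\colon X\to\mathbb{R} : \overline{D_f}\in\mathcal{P}\}$. For $f\in C(X)_\mathcal{P}$, $Z_\mathcal{P}(f)=\{x: f(x)=0\}$. A set $U\subseteq X$ is $\tau\mathcal{P}$-clopen if $U=Z_\mathcal{P}(f)=X\setminus Z_\mathcal{P}(g)$ for some $f,g\in C(X)_\mathcal{P}$. Sets $A,B\subseteq X$ are $\mathcal{P}$-completely separated if there is $f\in C(X)_\mathcal{P}$ with $f(A)\subseteq\{0\}$ and $f(B)\subseteq\{1\}$. $(X,\tau,\mathcal{P})$ is $\tau\mathcal{P}$-zero-dimensional if for every pair of $\mathcal{P}$-completely separated sets $A,B\subseteq X$ there is a $\tau\mathcal{P}$-clopen $U$ with $A\subseteq U\subseteq X\setminus B$. *)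

(* Defs.v *)
From HB Require Import structures.
From mathcomp Require Import all_boot all_order all_algebra.
From mathcomp Require Import all_classical all_reals all_analysis.
Set Implicit Arguments. Unset Strict Implicit. Unset Printing Implicit Defensive.
Import Order.TTheory GRing.Theory Num.Theory.
Import numFieldNormedType.Exports.
Local Open Scope classical_set_scope.
Local Open Scope ring_scope.

Section Defs.
Context {R : realType} {X : topologicalType}.

Definition tychonoff_space : Prop :=
  accessible_space X /\
  (forall (x : X) (B : set X), closed B -> ~ B x ->
     exists f : X -> R, continuous f /\ (forall y, 0 <= f y <= 1) /\
       f x = 0 /\ (forall y, B y -> f y = 1)).

Definition extremally_disconnected : Prop :=
  forall U : set X, open U -> open (closure U).

Definition closed_ideal (P : set (set X)) : Prop :=
  [/\ exists A, P A,
      (forall A, P A -> closed A),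
      (forall A B, P A -> P B -> P (A `|` B)) &
      (forall A B, P A -> closed B -> B `<=` A -> P B)].

Definition discont_set (f : X -> R) : set X :=
  [set x | ~ {for x, continuous f}].

Definition CP (P : set (set X)) (f : X -> R) : Prop :=
  P (closure (discont_set f)).

Definition ZP (f : X -> R) : set X := [set x | f x = 0].

Definition tauP_clopen (P : set (set X)) (U : set X) : Prop :=
  exists f g : X -> R, [/\ CP P f, CP P g, U = ZP f & U = ~` ZP g].

Definition P_completely_separated (P : set (set X)) (A B : set X) : Prop :=
  exists f : X -> R, [/\ CP P f, (forall a, A a -> f a = 0) &
                          (forall b, B b -> f b = 1)].

Definition tauP_zero_dimensional (P : set (set X)) : Prop :=
  forall A B : set X, P_completely_separated P A B ->
    exists U : set X, [/\ tauP_clopen P U, A `<=` U & U `<=` ~` B].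

End Defs.

(* Main.v *)
Require Import Defs.
From mathcomp Require Import all_boot all_order all_algebra.
From mathcomp Require Import all_classical all_reals all_analysis.
From mathcomp Require Import lra.
Import Order.TTheory GRing.Theory Num.Theory.
Import numFieldNormedType.Exports.
Local Open Scope classical_set_scope.
Local Open Scope ring_scope.

Lemma near_cst_cont (R : realType) (X : topologicalType) (h : X -> R) (x : X) :
  (\forall y \near x, h y = h x) -> {for x, continuous h}.
Proof.
move=> hn N /= hN; apply: filterS hn => y hy /=; rewrite hy; exact: nbhs_singleton hN.
Qed.

Lemma Dsame_lem (R : realType) (X : topologicalType) (g h : X -> R) :
  (forall x, g x = 1 - h x) -> discont_set g = discont_set h.
Proof.
move=> hg; apply/seteqP; split => x /= ncx cx; apply: ncx.
  have -> : g = fun y => 1 - h y by apply: funext => y; rewrite hg.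
  by apply: continuousB => //; exact: cvg_cst.
have -> : h = fun y => 1 - g y by apply: funext => y; rewrite hg subKr.
by apply: continuousB => //; exact: cvg_cst.
Qed.

Theorem theorem3p3 (R : realType) (X : topologicalType) :
  @tychonoff_space R X -> @extremally_disconnected X ->
  forall P : set (set X), closed_ideal P -> @tauP_zero_dimensional R X P.
Proof.
move=> _ hED P [_ Pcl _ Psub] A B [f [Pf fA fB]].
set D := closure (discont_set f).
have cD : closed D by exact: closed_closure.
have PD : P D := Pf.
set O := [set x | ~ D x /\ f x < 1/2].
have oO : open O.
  rewrite openE => x [nDx fx].
  have cx : {for x, continuous f}.
    apply: contrapT => ncx; apply: nDx; exact: subset_closure.
  have hW : \forall y \near x, ~ D y.
    exact: open_nbhs_nbhs (conj (closed_openC cD) nDx).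
  have hl : \forall y \near x, f y < 1/2.
    exact: cx _ (open_nbhs_nbhs (conj (@open_lt R (1/2)) fx)).
  by near=> y; split; [near: y | near: y].
have oC : open (closure O) := hED _ oO.
set U := [set x | (D x /\ A x) \/ (~ D x /\ closure O x)].
set chi := fun x => if `[< U x >] then (1 : R) else 0.
have hchi : P (closure (discont_set chi)).
  apply: (Psub D) => //; first exact: closed_closure.
  rewrite [X in _ `<=` X](closure_id D).1 //; apply: closureS => x /= ncx.
  apply: contrapT => nDx; apply: ncx; apply: near_cst_cont.
  have hW : \forall y \near x, ~ D y.
    exact: open_nbhs_nbhs (conj (closed_openC cD) nDx).
  have [cOx|ncOx] := pselect (closure O x).
    have hc : \forall y \near x, closure O y by exact: open_nbhs_nbhs (conj oC cOx).
    near=> y; rewrite /chi.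
    have -> : `[< U y >] = true by apply/asboolP; right; split; [near: y|near: y].
    by have -> : `[< U x >] = true by apply/asboolP; right.
  have hc : \forall y \near x, ~ closure O y.
    exact: open_nbhs_nbhs (conj (closed_openC (@closed_closure _ O)) ncOx).
  near=> y; rewrite /chi.
  have nDy : ~ D y by near: y.
  have ncy : ~ closure O y by near: y.
  have -> : `[< U y >] = false by apply/asboolP => -[[]|[]].
  have -> : `[< U x >] = false by apply/asboolP => -[[]|[]].
  by [].
have Dsame : forall g : X -> R, (forall x, g x = 1 - chi x) ->
    discont_set g = discont_set chi by move=> g hg; exact: Dsame_lem.
exists U; split.
- exists (fun x => 1 - chi x), chi; split => //.
  + by rewrite /CP Dsame.
  + apply/seteqP; split => x /=; rewrite /ZP /chi /=.
      by move=> Ux; rewrite (asboolT Ux) subrr.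
    by case: asboolP => // _; rewrite subr0 => /eqP; rewrite oner_eq0.
  + apply/seteqP; split => x /=; rewrite /ZP /chi /=.
      by move=> Ux; rewrite (asboolT Ux) => /eqP; rewrite oner_eq0.
    by case: asboolP => //.
- move=> a Aa; have [Da|nDa] := pselect (D a); [by left|right; split => //].
  apply: subset_closure; split => //; rewrite fA //; exact: divr_gt0.
- move=> x [[Dx Ax]|[nDx cOx]] Bx.
    by move: (fA _ Ax) (fB _ Bx) => -> /eqP; rewrite eq_sym oner_eq0.
  have cx : {for x, continuous f}.
    apply: contrapT => ncx; apply: nDx; exact: subset_closure.
  have hg : \forall y \near x, 1/2 < f y.
    have gt : 1/2 < f x by rewrite fB //; lra.
    exact: cx _ (open_nbhs_nbhs (conj (@open_gt R (1/2)) gt)).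
  have [y [[_ fy1] fy2]] := cOx _ hg.
  by move: (lt_trans fy2 fy1); rewrite ltxx.
Unshelve. all: by end_near.
Qed.
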